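(* Let $t\ge 2$. Let $G$ be a 2-ichromatic ordered graph with vertices $v_1<\dots<v_{m+n}$ such that $\{v_1,\ldots,v_m\}$ and $\{v_{m+1},\ldots,v_{m+n}\}$ are the parts of an interval 2-coloring of $G$. If $v_1v_{m+1}$, $v_mv_{m+n}$ and $v_mv_{m+1}$ are edges of $G$, then $R_t(G)\ge (2t+1)r+1$, where $r=\min(m,n)-1$.
   Context: An ordered graph is a graph together with a specified linear ordering of its vertex set. An ordered graph $G$ is contained in an ordered graph $H$ if there is an order-preserving injection $V(G)\to V(H)$ mapping edges to edges. An interval coloring of an ordered graph is a partition of its vertex set into independent sets each consisting of consecutive vertices (called parts); an ordered graph is 2-ichromatic if its minimum number of parts in an interval coloring is 2. $R_t(G)$ is the minimum $N$ such that every coloring of the edges of the ordered complete graph on $N$ vertices with $t$ colors contains a monochromatic copy of $G$. *)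

(* Defs.v *)
From mathcomp Require Import all_boot.
Set Implicit Arguments. Unset Strict Implicit. Unset Printing Implicit Defensive.

(* An ordered graph on V vertices: vertex set 'I_V ordered by the natural
   order of indices, edge relation e symmetric and irreflexive. *)
Definition ordered_graph (V : nat) (e : rel 'I_V) : Prop :=
  symmetric e /\ irreflexive e.

Definition independent_interval (V : nat) (e : rel 'I_V) (a b : nat) : Prop :=
  forall i j : 'I_V, a <= i < b -> a <= j < b -> ~~ e i j.

(* An interval coloring with k parts, given by cut points
   0 = a 0 < a 1 < ... < a k = V; part p is [a p, a p.+1). *)
Definition interval_coloring (V : nat) (e : rel 'I_V) (k : nat) (a : nat -> nat) : Prop :=
  [/\ a 0 = 0, a k = V,
      (forall p, p < k -> a p < a p.+1) &
      (forall p, p < k -> independent_interval e (a p) (a p.+1))].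

Definition interval_colorable (V : nat) (e : rel 'I_V) (k : nat) : Prop :=
  exists a, interval_coloring e k a.

Definition ichromatic (V : nat) (e : rel 'I_V) (k : nat) : Prop :=
  interval_colorable e k /\ forall j, j < k -> ~ interval_colorable e j.

(* cut points of the 2-part split {v_1..v_m}, {v_{m+1}..v_{m+n}} *)
Definition split2 (m n : nat) (p : nat) : nat :=
  match p with 0 => 0 | 1 => m | _ => m + n end.

(* edge between the vertices with (0-based) indices x and y *)
Definition edge_at (V : nat) (e : rel 'I_V) (x y : nat) : Prop :=
  exists i j : 'I_V, val i = x /\ val j = y /\ e i j.

(* A t-coloring of the edges of the ordered complete graph on 'I_N:
   c i j is the color of edge {i,j}, only consulted for i < j. *)
Definition has_mono_copy (N t : nat) (c : 'I_N -> 'I_N -> 'I_t)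
  (V : nat) (e : rel 'I_V) : Prop :=
  exists (f : 'I_V -> 'I_N) (k : 'I_t),
    (forall i j : 'I_V, i < j -> f i < f j) /\
    (forall i j : 'I_V, i < j -> e i j -> c (f i) (f j) = k).

Definition ramsey_arrow (N t : nat) (V : nat) (e : rel 'I_V) : Prop :=
  forall c : 'I_N -> 'I_N -> 'I_t, has_mono_copy c e.

(* Main.v *)
Require Import Defs.
From mathcomp Require Import all_boot.
From mathcomp Require Import zify.

Definition tab (P Q : nat) : nat :=
  if (P, Q) \in [:: (1,1);(1,3);(1,4);(2,2);(2,4);(3,4)] then 1 else 0.

Definition tabchk : bool :=
  all (fun A => all (fun B => all (fun C => all (fun D =>
    (A < B <= C) && (C < D) ==> ~~ ((tab A C == tab B C) && (tab B C == tab B D)))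
    (iota 0 5)) (iota 0 5)) (iota 0 5)) (iota 0 5).

Lemma tabchk_ok : tabchk. Proof. by []. Qed.

Lemma tab_free A B C D : A < B -> B <= C -> C < D -> D <= 4 ->
  tab A C = tab B C -> tab B C = tab B D -> False.
Proof.
move=> hAB hBC hCD hD e1 e2.
have := tabchk_ok; rewrite /tabchk.
have mi x : x <= 4 -> x \in iota 0 5 by rewrite mem_iota; lia.
have hA : A <= 4 by lia. have hB : B <= 4 by lia. have hC : C <= 4 by lia.
move/allP/(_ A (mi _ hA))/allP/(_ B (mi _ hB))
  /allP/(_ C (mi _ hC))/allP/(_ D (mi _ hD)).
by rewrite hAB hBC hCD e1 e2 !eqxx.
Qed.

Lemma tab_le1 P Q : tab P Q <= 1.
Proof. by rewrite /tab; case: ifP. Qed.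

Definition col (t p q : nat) : nat :=
  let k := minn p (2 * t - q) in
  if k + 3 <= t then k else (t - 2) + tab (p + 2 - t) (q + 2 - t).

Lemma col_lt t p q : 2 <= t -> col t p q < t.
Proof.
move=> ht; rewrite /col; case: ifP => h; first lia.
have := tab_le1 (p + 2 - t) (q + 2 - t); lia.
Qed.

Lemma col_free t a b c d : 2 <= t -> a < b -> b <= c -> c < d -> d <= 2 * t ->
  col t a c = col t b c -> col t b c = col t b d -> False.
Proof.
move=> ht hab hbc hcd hd; rewrite /col.
case: ifP => h1; case: ifP => h2; case: ifP => h3 => e1 e2;
  try (have := tab_le1 (a + 2 - t) (c + 2 - t));
  try (have := tab_le1 (b + 2 - t) (c + 2 - t));
  try (have := tab_le1 (b + 2 - t) (d + 2 - t)); try lia.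
move=> _ _ _.
apply: (tab_free (a + 2 - t) (b + 2 - t) (c + 2 - t) (d + 2 - t)); try lia.
Qed.

Lemma mono_gap V N (f : 'I_V -> 'I_N) :
  (forall i j : 'I_V, i < j -> f i < f j) ->
  forall d (i j : 'I_V), val j = val i + d -> f i + d <= f j.
Proof.
move=> hinc; elim=> [|d IH] i j /= hj.
  by rewrite addn0; have -> : j = i by apply: val_inj => /=; lia.
have hlt : i + d < V by have := ltn_ord j; lia.
have := IH i (Ordinal hlt) erefl.
have : Ordinal hlt < j by rewrite /=; lia.
move/hinc; lia.
Qed.

Theorem corollary5p1 (t m n : nat) (e : rel 'I_(m + n)) :
  2 <= t ->
  ordered_graph e ->
  ichromatic e 2 ->
  interval_coloring e 2 (split2 m n) ->
  edge_at e 0 m ->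
  edge_at e (m - 1) (m + n - 1) ->
  edge_at e (m - 1) m ->
  forall N : nat, ramsey_arrow N t e ->
    (2 * t + 1) * (minn m n - 1) + 1 <= N.
Proof.
move=> ht _ _ [_ _ hlt _] [i0 [j0 [vi0 [vj0 e0]]]] [i1 [j1 [vi1 [vj1 e1]]]]
  [i2 [j2 [vi2 [vj2 e2]]]] N hR.
have hm : 0 < m by have := hlt 0 erefl.
have hn : m < m + n by have := hlt 1 erefl.
have t0 : 0 < t by lia.
rewrite leqNgt; apply/negP => hN.
set r := minn m n - 1 in hN.
have [r0 | rpos] := posnP r.
  rewrite r0 muln0 add0n ltnS leqn0 in hN.
  case: (hR (fun _ _ => Ordinal t0)) => f _.
  by case: (f i0) => x; rewrite (eqP hN).
pose c := fun i j : 'I_N => Ordinal (ltn_pmod (col t (i %/ r) (j %/ r)) t0).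
case: (hR c) => f [k [hinc hcol]].
have ei2 : i2 = i1 by apply: val_inj; rewrite vi2 vi1.
have ej2 : j2 = j0 by apply: val_inj; rewrite vj2 vj0.
rewrite ei2 ej2 in e2.
move: vi0 vj0 vi1 vj1 => /= vi0 vj0 vi1 vj1.
have get (i j : 'I_(m + n)) : i < j -> e i j -> col t (f i %/ r) (f j %/ r) = k.
  move=> hij eij; have := hcol i j hij eij.
  by move/(congr1 val) => /=; rewrite modn_small // col_lt.
have k0 := get i0 j0 ltac:(lia) e0.
have k1 := get i1 j1 ltac:(lia) e1.
have k2 := get i1 j0 ltac:(lia) e2.
have g1 := @mono_gap _ _ f hinc (m - 1) i0 i1 ltac:(rewrite /=; lia).
have g2 := @mono_gap _ _ f hinc (n - 1) j0 j1 ltac:(rewrite /=; lia).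
have g3 := hinc i1 j0 ltac:(lia).
have g4 := ltn_ord (f j1).
have blk x y : x + r <= y -> x %/ r < y %/ r.
  move=> hxy; apply: leq_trans (_ : (x + r) %/ r <= _).
    by rewrite divnDr ?dvdnn // divnn rpos addn1.
  exact: leq_div2r.
apply: (@col_free t (f i0 %/ r) (f i1 %/ r) (f j0 %/ r) (f j1 %/ r) ht).
- apply: blk; lia.
- apply: leq_div2r; lia.
- apply: blk; lia.
- rewrite -ltnS ltn_divLR // ; lia.
- by rewrite k0 k2.
- by rewrite k2 k1.
Qed.
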